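(* Consider a single cell $K_e$ of the mesh, on which the finite element approximation is $u_h|_{K_e}=\sum_{j\in\mathcal N_e}u_j\varphi_j$ with coefficients $u_j\in\mathbb R^m$, and assume no facet of $K_e$ lies on a non-periodic boundary. Let $\mathcal G\subset\mathbb R^m$ be convex and assume $u_j\in\mathcal G$ for all $j\in\mathcal N_e$. Let $s$, $m_0^e$, $u_0^e$ be as defined in the context (so $u_0^e\in\mathcal G$), and for each $i\in\mathcal N_e^\partial$ let $\lambda_{0i}^e>0$ be such that the one-dimensional bar state $$\bar u_{0i}^e=\frac{u_i+u_0^e}{2}-\frac{(\mathbf f(u_i)-\mathbf f(u_0^e))\,\mathbf n_{i,e}}{2\lambda_{0i}^e}$$ belongs to $\mathcal G$. Define the intermediate cell average $$\bar u^e=u^e-\frac{\Delta t_e}{|K_e|}\int_{\partial K_e}\mathbf f_h\,\mathbf n\,\mathrm ds ,\qquad \mathbf f_h=\sum_{j\in\mathcal N_e}\mathbf f(u_j)\varphi_j,$$ with a parameter $\Delta t_e>0$. If $$\Delta t_e\le \Delta t_e^{\max}:=\frac1s\min\left\{\min_{i\in\mathcal N_e^\partial}\frac{m_i^e}{|\mathbf c_{i,e}|\lambda_{0i}^e},\ \frac{m_0^e}{\sum_{i\in\mathcal N_e^\partial}|\mathbf c_{i,e}|\lambda_{0i}^e}\right\},$$ then $\bar u^e\in\mathcal G$.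
   Context: Setting: $\Omega\subset\mathbb R^d$, a conforming mesh of cells $K_e$ (simplices or boxes), and a hyperbolic conservation law $\partial_t u+\nabla\cdot\mathbf f(u)=0$ with unknown $u\in\mathbb R^m$ and flux $\mathbf f:\mathbb R^m\to\mathbb R^{m\times d}$; for a vector $\mathbf n\in\mathbb R^d$, $\mathbf f(u)\mathbf n$ denotes the normal flux. The continuous finite element space of degree $p$ uses the Bernstein basis $\varphi_j$ (globally continuous, nonnegative, partition of unity). $\mathcal N_e$ is the set of global indices $j$ of basis functions supported on $K_e$; $\sum_{j\in\mathcal N_e}\varphi_j\equiv1$ on $K_e$. $\mathcal N_e^\partial=\{i\in\mathcal N_e: \mathbf x_i\in\partial K_e\}$ (nodes on the cell boundary) and $\mathcal N_e^0=\mathcal N_e\setminus\mathcal N_e^\partial$; for $i\in\mathcal N_e^0$, $\varphi_i$ vanishes on $\partial K_e$. $m_i^e=\int_{K_e}\varphi_i\,\mathrm d\mathbf x>0$, $|K_e|$ is the volume of $K_e$, and $u^e=\frac1{|K_e|}\sum_{i\in\mathcal N_e}m_i^eu_i$ is the cell average. $\mathbf n$ is the unit outward normal of $K_e$, $\mathbf c_{i,e}=\int_{\partial K_e}\varphi_i\mathbf n\,\mathrm ds$ (assumed nonzero for $i\in\mathcal N_e^\partial$), and $\mathbf n_{i,e}=\mathbf c_{i,e}/|\mathbf c_{i,e}|$. If $\mathcal N_e^0\neq\emptyset$: $s=1$, $m_0^e=\sum_{i\in\mathcal N_e^0}m_i^e$, $u_0^e=\frac1{m_0^e}\sum_{i\in\mathcal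 N_e^0}m_i^eu_i$. If $\mathcal N_e^0=\emptyset$: $s=2$, $m_0^e=|K_e|$, $u_0^e=u^e$. *)

(* Defs.v *)
From HB Require Import structures.
From mathcomp Require Import all_boot all_order all_algebra.
From mathcomp Require Import all_classical all_reals.
From mathcomp Require Import topology normedtype measure lebesgue_integral.
Set Implicit Arguments. Unset Strict Implicit. Unset Printing Implicit Defensive.
Import Order.TTheory GRing.Theory Num.Theory.
Local Open Scope ring_scope.
Local Open Scope classical_set_scope.

Section Defs.
Context (R : realType) (md : measure_display) (T : measurableType md).

Definition vint (k : nat) (mu : {measure set T -> \bar R}) (D : set T)
  (g : T -> 'cV[R]_k) : 'cV[R]_k :=
  \col_i Rintegral mu D (fun x => g x i 0).

Definition vnorm (k : nat) (v : 'cV[R]_k) : R := Num.sqrt (\sum_i v i 0 ^+ 2).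

Definition convex_set (k : nat) (G : set 'cV[R]_k) : Prop :=
  forall x y (t : R), 0 <= t <= 1 -> G x -> G y -> G (t *: x + (1 - t) *: y).

Context (I : finType) (mu sigma : {measure set T -> \bar R}) (K bK : set T).
Context (phi : I -> T -> R) (bnd : {pred I}).

Definition cell_vol : R := fine (mu K).
Definition mass (i : I) : R := Rintegral mu K (phi i).
Definition cvec (dim : nat) (nrm : T -> 'cV[R]_dim) (i : I) : 'cV[R]_dim :=
  vint sigma bK (fun x => phi i x *: nrm x).

Definition has_interior : bool := [exists i, ~~ bnd i].
Definition s_par : R := if has_interior then 1 else 2.
Definition m0 : R :=
  if has_interior then \sum_(i | ~~ bnd i) mass i else cell_vol.
Definition u0 (m : nat) (u : I -> 'cV[R]_m) : 'cV[R]_m :=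
  if has_interior then m0^-1 *: \sum_(i | ~~ bnd i) mass i *: u i
  else cell_vol^-1 *: \sum_i mass i *: u i.
Definition cell_avg (m : nat) (u : I -> 'cV[R]_m) : 'cV[R]_m :=
  cell_vol^-1 *: \sum_i mass i *: u i.
End Defs.

(* Main.v *)
Require Import Defs.
From HB Require Import structures.
From mathcomp Require Import all_boot all_order all_algebra.
From mathcomp Require Import all_classical all_reals.
From mathcomp Require Import topology normedtype measure lebesgue_integral.
From mathcomp Require Import ring lra.
Import Order.TTheory GRing.Theory Num.Theory.
Local Open Scope ring_scope.
Local Open Scope classical_set_scope.
Set Implicit Arguments. Unset Strict Implicit.

Lemma Rint_int_sum (R : realType) (md : measure_display) (T : measurableType md)
  (mu : {measure set T -> \bar R}) (D : set T) (J : Type) (s : seq J)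
  (f : J -> T -> R) : measurable D ->
  (forall j, mu.-integrable D (EFin \o f j)) ->
  mu.-integrable D (EFin \o (fun x => \sum_(j <- s) f j x)).
Proof.
move=> mD fi.
apply: (eq_integrable mD _ _ _ (integrable_sum mD s (P := xpredT) (fun j _ => fi j))) => x _.
by rewrite /= sumEFin.
Qed.

Lemma Rint_sum (R : realType) (md : measure_display) (T : measurableType md)
  (mu : {measure set T -> \bar R}) (D : set T) (J : Type) (s : seq J)
  (f : J -> T -> R) : measurable D ->
  (forall j, mu.-integrable D (EFin \o f j)) ->
  \int[mu]_(x in D) (\sum_(j <- s) f j x) = \sum_(j <- s) \int[mu]_(x in D) f j x.
Proof.
move=> mD fi; elim: s => [|j s IH].
  under eq_Rintegral do rewrite big_nil.
  by rewrite big_nil Rintegral_cst // mul0r.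
under eq_Rintegral do rewrite big_cons.
by rewrite big_cons RintegralD // ?IH //; apply: Rint_int_sum.
Qed.

Lemma Rint_Zl (R : realType) (md : measure_display) (T : measurableType md)
  (mu : {measure set T -> \bar R}) (D : set T) (r : R) (f : T -> R) :
  measurable D ->
  mu.-integrable D (EFin \o f) ->
  mu.-integrable D (EFin \o (fun x => r * f x)).
Proof.
move=> mD fi; apply: (eq_integrable mD _ _ _ (integrableZl mD r fi)) => x _ /=.
by rewrite EFinM.
Qed.
Definition Cw (R : realType) (k : nat) (G : set 'cV[R]_k) (a : R) (v : 'cV[R]_k) :=
  (a = 0 /\ v = 0) \/ (0 < a /\ G (a^-1 *: v)).

Lemma Cw_add (R : realType) (k : nat) (G : set 'cV[R]_k) a b v w :
  convex_set G -> Cw G a v -> Cw G b w -> Cw G (a + b) (v + w).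
Proof.
move=> cG [[-> ->]|[a0 Ga]] [[-> ->]|[b0 Gb]].
- by left; rewrite addr0 addr0.
- by right; rewrite !add0r.
- by right; rewrite !addr0.
right; split; first by rewrite addr_gt0.
have ab0 : a + b != 0 by rewrite gt_eqF // addr_gt0.
have t01 : 0 <= a / (a + b) <= 1.
  apply/andP; split; first by rewrite divr_ge0 // ltW // addr_gt0.
  by rewrite ler_pdivrMr ?addr_gt0 // mul1r lerDl ltW.
have := cG _ _ _ t01 Ga Gb.
suff -> : a / (a + b) *: (a^-1 *: v) + (1 - a / (a + b)) *: (b^-1 *: w)
   = (a + b)^-1 *: (v + w) by [].
rewrite !scalerA scalerDr; congr (_ *: _ + _ *: _).
  by field; rewrite ab0 gt_eqF.
by field; rewrite ab0 gt_eqF.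
Qed.

Lemma Cw0 (R : realType) (k : nat) (G : set 'cV[R]_k) : Cw G 0 0.
Proof. by left. Qed.

Lemma Cw_sum (R : realType) (k : nat) (G : set 'cV[R]_k) (J : finType) (P : pred J)
  (a : J -> R) (v : J -> 'cV[R]_k) :
  convex_set G -> (forall j, P j -> Cw G (a j) (v j)) ->
  Cw G (\sum_(j | P j) a j) (\sum_(j | P j) v j).
Proof.
move=> cG h; apply: (big_rec2 (Cw G)); first exact: Cw0.
by move=> j y1 y2 Pj; apply: Cw_add => //; apply: h.
Qed.

Lemma Cw_pt (R : realType) (k : nat) (G : set 'cV[R]_k) a p :
  0 <= a -> G p -> Cw G a (a *: p).
Proof.
rewrite le_eqVlt => /orP[/eqP <-|a0] Gp; first by left; rewrite scale0r.
by right; split => //; rewrite scalerA mulVf ?gt_eqF // scale1r.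
Qed.

Lemma Cw_G (R : realType) (k : nat) (G : set 'cV[R]_k) a v :
  Cw G a v -> 0 < a -> G (a^-1 *: v).
Proof. by move=> [[-> _]|[_ h]] // ; rewrite ltxx. Qed.

Lemma vnorm_gt0 (R : realType) (k : nat) (v : 'cV[R]_k) : v != 0 -> 0 < vnorm v.
Proof.
move=> v0; rewrite /vnorm sqrtr_gt0 lt_def sumr_ge0 ?andbT; last by move=> i _; rewrite sqr_ge0.
apply/negP => /eqP /psumr_eq0P H; move/negP: v0; apply; apply/eqP/matrixP => i l.
rewrite (ord1 l) mxE; apply/eqP; rewrite -sqrf_eq0; apply/eqP; apply: H => // j _.
exact: sqr_ge0.
Qed.

Section Geo.
Variables (R : realType) (md : measure_display) (T : measurableType md)
  (dim : nat) (mu sigma : {measure set T -> \bar R}) (K bK : set T)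
  (nrm : T -> 'cV[R]_dim) (I : finType) (phi : I -> T -> R) (bnd : {pred I}).
Hypotheses (mK : measurable K) (mbK : measurable bK) (bKK : bK `<=` K)
  (phi1 : forall x, K x -> \sum_j phi j x = 1)
  (phi0 : forall i x, ~~ bnd i -> bK x -> phi i x = 0)
  (iphi : forall j, mu.-integrable K (fun x => (phi j x)%:E))
  (iphin : forall j k, sigma.-integrable bK (fun x => (phi j x * nrm x k 0)%:E)).

Lemma cvecE i k : cvec sigma bK phi nrm i k 0 = \int[sigma]_(x in bK) (phi i x * nrm x k 0).
Proof. by rewrite /cvec /vint mxE; apply: eq_Rintegral => x _; rewrite mxE. Qed.

Lemma sum_mass : \sum_i mass mu K phi i = cell_vol mu K.
Proof.
rewrite /mass -Rint_sum //.
rewrite (eq_Rintegral _ (g := (fun=> 1))); last by move=> x /set_mem xK; rewrite phi1.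
by rewrite Rintegral_cst // mul1r.
Qed.

Lemma cvec_int i : ~~ bnd i -> cvec sigma bK phi nrm i = 0.
Proof.
move=> bi; apply/matrixP => k l; rewrite (ord1 l) cvecE mxE.
rewrite (eq_Rintegral _ (g := (fun=> 0))); last first.
  by move=> x /set_mem xb; rewrite phi0 // mul0r.
by rewrite Rintegral_cst // mul0r.
Qed.

Lemma sum_cvec : vint sigma bK nrm = 0 -> \sum_i cvec sigma bK phi nrm i = 0.
Proof.
move=> vn; apply/matrixP => k l; rewrite (ord1 l) summxE.
under eq_bigr do rewrite cvecE.
rewrite -Rint_sum //; last by move=> j; exact: iphin.
rewrite (eq_Rintegral _ (g := (fun x => nrm x k 0))); last first.
  by move=> x /set_mem xb; rewrite -mulr_suml phi1 ?mul1r //; apply: bKK.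
by move/matrixP: vn => /(_ k 0); rewrite !mxE.
Qed.

Lemma flux_eq (m : nat) (Fu : I -> 'M[R]_(m, dim)) :
  vint sigma bK (fun x => (\sum_j phi j x *: Fu j) *m nrm x)
  = \sum_j Fu j *m cvec sigma bK phi nrm j.
Proof.
apply/matrixP => k l; rewrite (ord1 l) /vint mxE summxE.
rewrite (@eq_Rintegral _ _ _ _ _
   (fun x => \sum_j \sum_l Fu j k l * (phi j x * nrm x l 0))); last first.
  move=> x _; rewrite mxE.
  under eq_bigr do rewrite summxE big_distrl /=.
  rewrite exchange_big /=; apply: eq_bigr => j _; apply: eq_bigr => l' _.
  by rewrite mxE; ring.
rewrite Rint_sum //; last first.
  move=> j; apply: Rint_int_sum => // l'; by apply: Rint_Zl => //; exact: iphin.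
apply: eq_bigr => j _; rewrite mxE Rint_sum //; last by move=> l'; by apply: Rint_Zl => //; exact: iphin.
apply: eq_bigr => l' _; rewrite RintegralZl // ?cvecE //; exact: iphin.
Qed.

End Geo.

Lemma core (R : realType) (m : nat) (G : set 'cV[R]_m) (I : finType) (bnd : {pred I})
  (u ub : I -> 'cV[R]_m) (x0 : 'cV[R]_m) (a : R) (b w : I -> R) (dt V : R) :
  convex_set G -> G x0 -> (forall i, bnd i -> G (u i)) -> (forall i, bnd i -> G (ub i)) ->
  0 <= dt -> (forall i, bnd i -> 0 <= w i) ->
  dt * (\sum_(i | bnd i) w i) <= a -> (forall i, bnd i -> dt * w i <= b i) ->
  a + \sum_(i | bnd i) b i = V -> 0 < V ->
  G (V^-1 *: (a *: x0 + \sum_(i | bnd i) b i *: u i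
       - dt *: \sum_(i | bnd i) w i *: (u i + x0 - 2%:R *: ub i))).
Proof.
move=> cG Gx0 Gu Gub dt0 w0 ha hb hV V0.
set W := \sum_(i | bnd i) w i.
have -> : a *: x0 + \sum_(i | bnd i) b i *: u i
       - dt *: \sum_(i | bnd i) w i *: (u i + x0 - 2%:R *: ub i)
   = (a - dt * W) *: x0 + \sum_(i | bnd i) (b i - dt * w i) *: u i
     + \sum_(i | bnd i) (2%:R * dt * w i) *: ub i.
  apply/matrixP => k l; rewrite !(mxE, summxE).
  under eq_bigr do rewrite !mxE.
  under [X in _ = _ + X + _]eq_bigr do rewrite !mxE.
  under [X in _ = _ + _ + X]eq_bigr do rewrite !mxE.
  under [X in dt * X]eq_bigr do rewrite !mxE.
  set S1 := \sum_(i | bnd i) b i * u i k l.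
  have h1 : \sum_(i | bnd i) (b i - dt * w i) * u i k l
      = S1 - dt * \sum_(i | bnd i) w i * u i k l.
    by rewrite mulr_sumr -sumrB; apply: eq_bigr => i _; ring.
  have h2 : \sum_(i | bnd i) w i * (u i k l + x0 k l - 2%:R * ub i k l)
      = \sum_(i | bnd i) w i * u i k l + W * x0 k l
        - 2%:R * \sum_(i | bnd i) w i * ub i k l.
    by rewrite /W mulr_suml mulr_sumr -big_split -sumrB; apply: eq_bigr => i _ /=; ring.
  have h3 : \sum_(i | bnd i) 2%:R * dt * w i * ub i k l
      = 2%:R * dt * \sum_(i | bnd i) w i * ub i k l.
    by rewrite mulr_sumr; apply: eq_bigr => i _; ring.
  rewrite h1 h2 h3; ring.
apply: Cw_G; last exact: V0.
have -> : V = (a - dt * W) + \sum_(i | bnd i) (b i - dt * w i)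
              + \sum_(i | bnd i) (2%:R * dt * w i).
  rewrite -hV sumrB -!mulr_sumr /W; ring.
apply: Cw_add => //; first apply: Cw_add => //.
- by apply: Cw_pt => //; rewrite subr_ge0.
- by apply: Cw_sum => // i bi; apply: Cw_pt; [rewrite subr_ge0; exact: hb|exact: Gu].
- apply: Cw_sum => // i bi; apply: Cw_pt; last exact: Gub.
  by rewrite !mulr_ge0 // w0.
Qed.

Lemma bar_id (R : realType) (m dim : nat) (D : 'M[R]_(m,dim)) (c : 'cV[R]_dim)
  (ui x0 : 'cV[R]_m) (lam : R) :
  c != 0 -> 0 < lam ->
  D *m c = (vnorm c * lam) *: (ui + x0 - 2%:R *: ((2%:R)^-1 *: (ui + x0)
     - (2 * lam)^-1 *: (D *m ((vnorm c)^-1 *: c)))).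
Proof.
move=> c0 l0; have nc0 := vnorm_gt0 c0.
rewrite -scalemxAr; set X := D *m c.
apply/matrixP => k l; rewrite !mxE; field.
by rewrite !gt_eqF.
Qed.

Lemma div_helper (R : realType) (dt s M W : R) :
  0 < W -> dt <= s^-1 * (M / W) -> dt * W <= s^-1 * M.
Proof. by move=> W0; rewrite mulrA ler_pdivlMr. Qed.
Theorem lemma1
  (R : realType) (md : measure_display) (T : measurableType md)
  (dim m : nat)
  (mu sigma : {measure set T -> \bar R})      (* volume and surface measures *)
  (K bK : set T)                              (* the cell K_e and its boundary *)
  (nrm : T -> 'cV[R]_dim)                     (* unit outward normal on bK *)
  (I : finType)                               (* local index set N_e *)
  (xn : I -> T)                               (* nodes x_i *)
  (bnd : {pred I})                            (* N_e^boundary *)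
  (phi : I -> T -> R)                         (* basis functions on K_e *)
  (F : 'cV[R]_m -> 'M[R]_(m, dim))            (* flux f *)
  (G : set 'cV[R]_m) (u : I -> 'cV[R]_m) (lam : I -> R) (dt : R) :
  (* cell geometry *)
  measurable K -> measurable bK -> bK `<=` K -> (mu K < +oo)%E ->
  (forall x, bK x -> vnorm (nrm x) = 1) ->
  (forall k, sigma.-integrable bK (fun x => (nrm x k 0)%:E)) ->
  vint sigma bK nrm = 0 ->                     (* int_{dK} n ds = 0 *)
  (* basis functions *)
  (forall i, bnd i <-> bK (xn i)) ->
  (forall j x, K x -> 0 <= phi j x) ->
  (forall x, K x -> \sum_j phi j x = 1) ->
  (forall i x, ~~ bnd i -> bK x -> phi i x = 0) ->
  (forall j, mu.-integrable K (fun x => (phi j x)%:E)) ->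
  (forall j k, sigma.-integrable bK (fun x => (phi j x * nrm x k 0)%:E)) ->
  (forall i, 0 < mass mu K phi i) ->
  (forall i, bnd i -> cvec sigma bK phi nrm i != 0) ->
  (* admissible set and states *)
  convex_set G ->
  (forall j, G (u j)) ->
  (forall i, bnd i -> 0 < lam i) ->
  (forall i, bnd i ->
     let ni := (vnorm (cvec sigma bK phi nrm i))^-1 *: cvec sigma bK phi nrm i in
     G ((2%:R)^-1 *: (u i + u0 mu K phi bnd u)
        - (2 * lam i)^-1 *: ((F (u i) - F (u0 mu K phi bnd u)) *m ni))) ->
  (* time step restriction *)
  0 < dt ->
  (forall i, bnd i ->
     dt <= (s_par R bnd)^-1 *
           (mass mu K phi i / (vnorm (cvec sigma bK phi nrm i) * lam i))) ->
  dt <= (s_par R bnd)^-1 *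
        (m0 mu K phi bnd /
         \sum_(i | bnd i) vnorm (cvec sigma bK phi nrm i) * lam i) ->
  G (cell_avg mu K phi u
     - (dt / cell_vol mu K) *:
         vint sigma bK (fun x => (\sum_j phi j x *: F (u j)) *m nrm x)).
Proof.
move=> mK mbK bKK muK nrm1 inrm vn0 bndx phige0 phi1 phi0 iphi iphin mpos cne0
  cG Gu lam0 Gbar dt0 hdti hdt.
set c := cvec sigma bK phi nrm.
set x0 := u0 mu K phi bnd u.
set V := cell_vol mu K.
set ms := mass mu K phi.
pose w i := vnorm (c i) * lam i.
pose W := \sum_(i | bnd i) w i.
pose ub i := (2%:R)^-1 *: (u i + x0)
        - (2 * lam i)^-1 *: ((F (u i) - F x0) *m ((vnorm (c i))^-1 *: c i)).
have Gub : forall i, bnd i -> G (ub i) by move=> i bi; exact: (Gbar i bi).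
have w0 : forall i, bnd i -> 0 < w i.
  by move=> i bi; rewrite mulr_gt0 ?lam0 ?vnorm_gt0 ?cne0.
have hflux : vint sigma bK (fun x => (\sum_j phi j x *: F (u j)) *m nrm x)
     = \sum_(i | bnd i) w i *: (u i + x0 - 2%:R *: ub i).
  rewrite flux_eq //.
  have -> : \sum_j F (u j) *m c j = \sum_j (F (u j) - F x0) *m c j.
    under [RHS]eq_bigr do rewrite mulmxBl.
    by rewrite sumrB -mulmx_sumr (sum_cvec mbK bKK phi1 iphin vn0) mulmx0 subr0.
  rewrite (bigID bnd) /= [X in _ + X]big1 ?addr0; last first.
    by move=> i bi; rewrite /c (@cvec_int _ _ _ _ sigma bK nrm _ phi bnd mbK phi0 i bi) mulmx0.
  by apply: eq_bigr => i bi; rewrite /w /ub (@bar_id _ _ _ _ _ (u i) x0 _ (cne0 i bi) (lam0 i bi)).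
have W0 : 0 < W.
  rewrite lt_def sumr_ge0 ?andbT; last by move=> i bi; exact: ltW (w0 i bi).
  apply/negP => /eqP W0; move: hdt; rewrite -/W W0 invr0 !mulr0.
  by rewrite leNgt dt0.
have [i0 bi0] : exists i0, bnd i0.
  case: (pickP bnd) => [i bi|nob]; first by exists i.
  by move: W0; rewrite /W big_pred0 ?ltxx.
have hV : \sum_i ms i = V by rewrite /ms sum_mass.
have V0 : 0 < V.
  rewrite -hV (bigD1 i0) //=; apply: (lt_le_trans (mpos i0)).
  by rewrite lerDl sumr_ge0 // => j _; exact: ltW.
rewrite hflux /cell_avg -/V -/ms.
have -> : V^-1 *: \sum_i ms i *: u i
    - (dt / V) *: \sum_(i | bnd i) w i *: (u i + x0 - 2%:R *: ub i)
  = V^-1 *: (\sum_i ms i *: u i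
    - dt *: \sum_(i | bnd i) w i *: (u i + x0 - 2%:R *: ub i)).
  by rewrite scalerBr scalerA mulrC.
case hI : (has_interior bnd).
-
  have [j0 nbj0] : exists j0, ~~ bnd j0 by move/existsP: hI.
  have hm0 : m0 mu K phi bnd = \sum_(i | ~~ bnd i) ms i by rewrite /m0 hI.
  have m00 : 0 < \sum_(i | ~~ bnd i) ms i.
    rewrite (bigD1 j0) //=; apply: (lt_le_trans (mpos j0)).
    by rewrite lerDl sumr_ge0 // => j _; exact: ltW.
  have hx0 : x0 = (\sum_(i | ~~ bnd i) ms i)^-1 *: \sum_(i | ~~ bnd i) ms i *: u i.
    by rewrite /x0 /u0 hI /m0 hI.
  have Gx0 : G x0.
    rewrite hx0; apply: Cw_G => //; apply: Cw_sum => // i _.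
    by apply: Cw_pt => //; exact: ltW.
  have hs : s_par R bnd = 1 by rewrite /s_par hI.
  have -> : \sum_i ms i *: u i
      = (\sum_(i | ~~ bnd i) ms i) *: x0 + \sum_(i | bnd i) ms i *: u i.
    by rewrite hx0 scalerA mulfV ?gt_eqF // scale1r addrC [LHS](bigID bnd).
  apply: core => //.
  + exact: ltW.
  + by move=> i bi; exact: ltW (w0 i bi).
  + by have := div_helper W0 hdt; rewrite hs invr1 !mul1r hm0.
  + move=> i bi; have := div_helper (w0 i bi) (hdti i bi).
    by rewrite hs invr1 !mul1r.
  + by rewrite -hV [RHS](bigID bnd) addrC.
-
  have allb : forall i, bnd i.
    by move=> i; apply/negPn; move/negbT/existsPn: hI; apply.
  have hm0 : m0 mu K phi bnd = V by rewrite /m0 hI.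
  have hx0 : x0 = V^-1 *: \sum_i ms i *: u i by rewrite /x0 /u0 hI.
  have Gx0 : G x0.
    rewrite hx0 -hV; apply: Cw_G; last by rewrite hV.
    apply: Cw_sum => // i _.
    by apply: Cw_pt => //; exact: ltW.
  have hs : s_par R bnd = 2%:R by rewrite /s_par hI.
  have -> : \sum_i ms i *: u i
      = (2%:R^-1 * V) *: x0 + \sum_(i | bnd i) (2%:R^-1 * ms i) *: u i.
    rewrite hx0 scalerA -mulrA mulfV ?gt_eqF // mulr1.
    under [X in _ = _ + X]eq_bigr do rewrite -scalerA.
    rewrite -scaler_sumr [X in _ = _ + _ *: X](eq_bigl xpredT) // -scalerDl.
    have -> : (2%:R^-1 + 2%:R^-1 : R) = 1 by field. 
    by rewrite scale1r.
  apply: core => //.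
  + exact: ltW.
  + by move=> i bi; exact: ltW (w0 i bi).
  + by have := div_helper W0 hdt; rewrite hs hm0.
  + by move=> i bi; have := div_helper (w0 i bi) (hdti i bi); rewrite hs.
  + by rewrite -mulr_sumr (eq_bigl xpredT) // hV; field.
Qed.
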